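(* (i) Let $B_1,\dots,B_n$ be subspaces of a finite-dimensional vector space $W$ over a finite field and let $\beta\subseteq\{1,\dots,n\}$. Then there exists a subspace $A$ of $W$ such that $H(T_A(B_j))=H(B_j\mid B_{\beta\setminus j})$ for all $j\in\beta$, $H(T_A(B_j):j\in\beta)=\sum_{j\in\beta}H(T_A(B_j))$, and $H(A)=H(B_\beta)-\sum_{j\in\beta}H(B_j\mid B_{\beta\setminus j})$. (ii) Let $\{B^i_1,\dots,B^i_n\}_{i=1}^\infty$ be a sequence of collections of subspaces (for each $i$, of a finite-dimensional vector space $W^i$ over a finite field), $\beta\subseteq\{1,\dots,n\}$, and $k(i)>0$ with $\lim_{i\to\infty}\frac{1}{k(i)}\big(H(B^i_\beta)-\sum_{j\in\beta}H(B^i_j\mid B^i_{\beta\setminus j})\big)=0$. Then there exist subspaces $A^i$ of $W^i$ such that for every $i$, $\sum_{j\in\beta}H(T_{A^i}(B^i_j))=H(T_{A^i}(B^i_j):j\in\beta)$, and for all $\alpha\subseteq\{1,\dots,n\}$, $\lim_{i\to\infty}\frac{1}{k(i)}H(T_{A^i}(B^i_j):j\in\alpha)=\lim_{i\to\infty}\frac{1}{k(i)}H(B^i_\alpha)$ (in the sense that if either limit exists then both exist and are equal).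
   Context: For subspaces, $\langle\cdots\rangle$ denotes the span. $B_\gamma$ denotes the collection $\{B_j:j\in\gamma\}$ and $B_{\beta\setminus j}=\{B_l:l\in\beta, l\ne j\}$. $H(B_\gamma)=H(B_j:j\in\gamma)=\dim\langle B_j:j\in\gamma\rangle$, $H(B)=\dim B$, and $H(\mathcal{S}\mid\mathcal{R})=\dim\langle\mathcal{S},\mathcal{R}\rangle-\dim\langle\mathcal{R}\rangle$. For a subspace $A$ of $W$, choose any $A^*$ with $\langle A,A^*\rangle=W$, $A\cap A^*=\{0\}$; for $u=u_1+u_2$ with $u_1\in A^*,u_2\in A$ set $T_A(u)=u_1$, and $T_A(B)=\{T_A(u):u\in B\}$. (The dimensions in the statement do not depend on the choice of $A^*$.) *)

(* Defs.v *)
From HB Require Import structures.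
From mathcomp Require Import all_boot all_order all_algebra.
From mathcomp Require Import boolp classical_sets reals topology normedtype.
Set Implicit Arguments. Unset Strict Implicit. Unset Printing Implicit Defensive.
Import Order.TTheory GRing.Theory Num.Theory.
Local Open Scope ring_scope.

Section Entropy.
Variables (F : fieldType) (vT : vectType F).

Definition spanB (n : nat) (B : 'I_n -> {vspace vT}) (g : {set 'I_n}) : {vspace vT} :=
  (\sum_(j in g) B j)%VS.

Definition Hset (n : nat) (B : 'I_n -> {vspace vT}) (g : {set 'I_n}) : nat :=
  \dim (spanB B g).

Definition Hcond (n : nat) (B : 'I_n -> {vspace vT}) (j : 'I_n) (beta : {set 'I_n}) : nat :=
  (\dim (B j + spanB B (beta :\ j))%VS - \dim (spanB B (beta :\ j)))%N.

Definition is_compl (A C : {vspace vT}) : Prop :=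
  (A + C)%VS = fullv /\ (A :&: C)%VS = 0%VS.

(* T_A(B) for the decomposition W = A^* (+) A with A^* = C:
   u = u1 + u2, u1 in C, u2 in A, T_A(u) = u1; i.e. projection onto C along A *)
Definition TA (A C B : {vspace vT}) : {vspace vT} := (daddv_pi C A @: B)%VS.

End Entropy.

(* Main.v *)
Require Import Defs.
From HB Require Import structures.
From mathcomp Require Import all_boot all_order all_algebra.
From mathcomp Require Import boolp classical_sets reals topology normedtype.
From mathcomp Require Import zify ring lra.
Import Order.TTheory GRing.Theory Num.Theory numFieldNormedType.Exports.
Local Open Scope classical_set_scope.
Local Open Scope ring_scope.

Section Key.
Variables (F : fieldType) (vT : vectType F).

Lemma lker_pi (A C : {vspace vT}) : is_compl A C -> lker (daddv_pi C A) = A.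
Proof.
move=> [hs hc]; have hc' : (C :&: A = 0)%VS by rewrite capvC.
apply/vspaceP => v; rewrite memv_ker.
have hv : v \in (C + A)%VS by rewrite addvC hs memvf.
have E := daddv_pi_add hc' hv.
apply/eqP/idP => [H0|vA].
  by move: E; rewrite H0 add0r => <-; apply: memv_pi.
by move: E; rewrite (daddv_pi_id hc vA) => /(canRL (addrK v)); rewrite subrr.
Qed.

Variables (n : nat) (B : 'I_n -> {vspace vT}) (beta : {set 'I_n}).

Definition Adef := (\sum_(j in beta) (B j :&: spanB B (beta :\ j)))%VS.

Lemma A_subS j : j \in beta -> (Adef <= spanB B (beta :\ j))%VS.
Proof.
move=> jb; apply/subv_sumP => l lb; case: (eqVneq l j) => [->|ne].
  exact: capvSr.
apply: subv_trans (capvSl _ _) _; apply: (sumv_sup l) => //.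
by rewrite in_setD1 ne lb.
Qed.

Lemma A_subV : (Adef <= spanB B beta)%VS.
Proof. apply/subv_sumP => l lb; apply: subv_trans (capvSl _ _) _; exact: (sumv_sup l). Qed.

Lemma BcapA j : j \in beta -> (B j :&: Adef)%VS = (B j :&: spanB B (beta :\ j))%VS.
Proof.
move=> jb; apply/eqP; rewrite eqEsubv capvS ?A_subS //=.
by rewrite subv_cap capvSl /=; apply: (sumv_sup j).
Qed.

Lemma split_sum (T : nmodType) (f : 'I_n -> T) j : j \in beta ->
  \sum_(i in beta) f i = f j + \sum_(i in beta :\ j) f i.
Proof.
move=> jb; rewrite (bigD1 j) //=; congr (_ + _); apply: eq_bigl => i.
by rewrite in_setD1 andbC.
Qed.

Lemma Hcond_eq j : Hcond B j beta =
   (\dim (B j) - \dim (B j :&: spanB B (beta :\ j)))%N.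
Proof.
rewrite /Hcond; have := dimv_sum_cap (B j) (spanB B (beta :\ j)).
have := dimvS (capvSl (B j) (spanB B (beta :\ j))). lia.
Qed.

Lemma part_i (C : {vspace vT}) : is_compl Adef C ->
  (forall j, j \in beta -> \dim (TA Adef C (B j)) = Hcond B j beta) /\
  \dim (\sum_(j in beta) TA Adef C (B j))%VS
     = (\sum_(j in beta) \dim (TA Adef C (B j)))%N /\
  (\dim Adef + \sum_(j in beta) Hcond B j beta)%N = Hset B beta.
Proof.
move=> hC; set f := daddv_pi C Adef.
have hk : lker f = Adef by apply: lker_pi.
have ha : forall j, j \in beta -> \dim (TA Adef C (B j)) = Hcond B j beta.
  move=> j jb; rewrite Hcond_eq /TA -/f.
  have := limg_ker_dim f (B j); rewrite hk BcapA // => <-; by rewrite addKn.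
have hd : directv (\sum_(j in beta) TA Adef C (B j)).
  apply/directv_sum_independent => us Hus Hsum j jb.
  have: forall i, exists b : vT, i \in beta -> (b \in B i /\ us i = f b).
    move=> i; case: (boolP (i \in beta)) => ib; last by exists 0.
    by have /memv_imgP[b bB ->] := Hus i ib; exists b.
  move=> /choice [bs Hbs].
  have sA : \sum_(i in beta) bs i \in Adef.
    rewrite -hk memv_ker linear_sum /=; apply/eqP; apply: (eq_trans _ Hsum); apply: eq_bigr => i ib.
    by case: (Hbs i ib).
  have bjS : bs j \in (B j :&: spanB B (beta :\ j))%VS.
    rewrite memv_cap; case: (Hbs j jb) => -> _ /=.
    have -> : bs j = \sum_(i in beta) bs i - \sum_(i in beta :\ j) bs i.
      by rewrite (split_sum _ bs j jb) addrK.
    have sS := subvP (A_subS j jb) _ sA; apply: memvB => //.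
    by rewrite /spanB; apply: memv_sumr => i /setD1P[_ ib]; case: (Hbs i ib).
  case: (Hbs j jb) => _ ->; apply/eqP; rewrite -memv_ker hk.
  by rewrite -BcapA // in bjS; move: bjS; rewrite memv_cap => /andP[].
have hdim : \dim (\sum_(j in beta) TA Adef C (B j))%VS
     = (\sum_(j in beta) \dim (TA Adef C (B j)))%N by apply/directvP.
split => //; split => //.
rewrite -(eq_bigr _ ha) -hdim /TA -/f -limg_sum.
have := limg_ker_dim f (spanB B beta); rewrite hk.
by rewrite (capv_idPr A_subV) /Hset /spanB.
Qed.

Lemma part_alpha (C : {vspace vT}) (alpha : {set 'I_n}) : is_compl Adef C ->
  (\dim (\sum_(j in alpha) TA Adef C (B j)) <= Hset B alpha)%N /\
  (Hset B alpha <= \dim (\sum_(j in alpha) TA Adef C (B j)) + \dim Adef)%N.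
Proof.
move=> hC; rewrite /TA -limg_sum /Hset /spanB.
have := limg_ker_dim (daddv_pi C Adef) (\sum_(j in alpha) B j)%VS.
rewrite lker_pi // => E.
have := dimvS (capvSr (\sum_(j in alpha) B j)%VS Adef); lia.
Qed.

End Key.

Lemma cvg_sandwich (R : realType) (u v w : nat -> R) (l : R) :
  (forall i, 0 <= v i - u i <= w i) -> w @ \oo --> 0 ->
  (u @ \oo --> l <-> v @ \oo --> l).
Proof.
move=> H w0.
have d0 : (fun i => v i - u i) @ \oo --> 0.
  apply: (squeeze_cvgr _ (cvg_cst 0) w0); apply: filterE => i; exact: H.
split => h.
  have -> : v = (fun i => u i + (v i - u i)) by apply/funext => i; rewrite addrC subrK.
  by rewrite -[l]addr0; apply: cvgD.
have -> : u = (fun i => v i - (v i - u i)) by apply/funext => i; rewrite opprB addrC subrK.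
by rewrite -[l]subr0; apply: cvgB.
Qed.

Theorem lemma5 :
  (* (i) *)
  (forall (F : finFieldType) (vT : vectType F) (n : nat)
          (B : 'I_n -> {vspace vT}) (beta : {set 'I_n}),
   exists A : {vspace vT},
     forall C : {vspace vT}, is_compl A C ->
       (forall j, j \in beta -> \dim (TA A C (B j)) = Hcond B j beta) /\
       \dim (\sum_(j in beta) TA A C (B j))%VS
         = (\sum_(j in beta) \dim (TA A C (B j)))%N /\
       (\dim A + \sum_(j in beta) Hcond B j beta)%N = Hset B beta) /\
  (* (ii) *)
  (forall (R : realType) (F : nat -> finFieldType)
          (vT : forall i, vectType (F i)) (n : nat)
          (B : forall i, 'I_n -> {vspace vT i}) (beta : {set 'I_n})
          (k : nat -> R),
   (forall i, 0 < k i) ->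
   (fun i => ((Hset (B i) beta)%:R
               - (\sum_(j in beta) Hcond (B i) j beta)%:R) / k i) @ \oo --> (0 : R) ->
   exists A : forall i, {vspace vT i},
     forall C : forall i, {vspace vT i}, (forall i, is_compl (A i) (C i)) ->
       (forall i, (\sum_(j in beta) \dim (TA (A i) (C i) (B i j)))%N
                  = \dim (\sum_(j in beta) TA (A i) (C i) (B i j))%VS) /\
       (forall (alpha : {set 'I_n}) (l : R),
          ((fun i => (\dim (\sum_(j in alpha) TA (A i) (C i) (B i j))%VS)%:R / k i)
             @ \oo --> l)
          <->
          ((fun i => (Hset (B i) alpha)%:R / k i) @ \oo --> l))).
Proof.
split.
  move=> F vT n B beta; exists (@Adef _ _ n B beta) => C hC.
  exact: part_i.
move=> R F vT n B beta k kpos hk.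
exists (fun i => @Adef _ _ n (B i) beta) => C hC.
have hd : forall i, ((\dim (@Adef _ _ n (B i) beta))%N
     + \sum_(j in beta) Hcond (B i) j beta)%N = Hset (B i) beta.
  by move=> i; have [_ [_ h]] := @part_i _ _ n (B i) beta (C i) (hC i).
split.
  by move=> i; have [_ [h _]] := @part_i _ _ n (B i) beta (C i) (hC i).
move=> alpha l.
apply: (@cvg_sandwich R _ _ (fun i => (\dim (@Adef _ _ n (B i) beta))%:R / k i)).
  move=> i; have [h1 h2] := @part_alpha _ _ n (B i) beta (C i) alpha (hC i).
  have kp := kpos i.
  rewrite -mulrBl; apply/andP; split.
    by apply: divr_ge0; [rewrite subr_ge0 ler_nat | exact: ltW].
  apply: ler_wpM2r; first by rewrite invr_ge0 ltW.
  by rewrite lerBlDr -natrD ler_nat addnC.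
have E : (fun i => ((Hset (B i) beta)%:R
               - (\sum_(j in beta) Hcond (B i) j beta)%:R) / k i)
   = (fun i => (\dim (@Adef _ _ n (B i) beta))%:R / k i).
  by apply/funext => i; rewrite -hd natrD addrK.
by rewrite -E.
Qed.
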